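(* (i) $F_{L_2}\Subset F^{*}_{\mathcal T_1}$ but $F_{L_1}\not\Subset F^{*}_{\mathcal T_1}$. (ii) $F_{L_4}\Subset F^{**}_{\mathcal T_1}$ but $F_{L_3}\not\Subset F^{**}_{\mathcal T_1}$. (iii) $F_{L_3}\Subset F^{*}_{\mathcal T_2}$ but $F_{L_4}\not\Subset F^{*}_{\mathcal T_2}$. (iv) $F_Q\Subset F^{*}_{\mathcal T_1}$, $F_Q\Subset F^{**}_{\mathcal T_1}$ and $F_Q\Subset F^{*}_{\mathcal T_2}$.
   Context: $H_k\subseteq\mathbb R[x,y,z]$: real ternary forms of degree $k$; $P_{3,4}=\{f\in H_4: f\ge0\text{ on }\mathbb P^2(\mathbb R)\}$. For $f\in P_{3,4}$, $F_f=\{g\in P_{3,4}: f-\epsilon g\in P_{3,4}$ for some $\epsilon>0\}$ (the smallest face of $P_{3,4}$ containing $f$). $GL_3(\mathbb R)$ acts on forms by $(\sigma f)(a)=f(\sigma^{-1}a)$. For faces $F,G$ of $P_{3,4}$, $F\Subset G$ means there is $\sigma\in GL_3(\mathbb R)$ with $F\subseteq\sigma(G)$. For a real line $l'$ (identified with a defining linear form) and a projective linear subspace $U\subseteq\mathbb P^2(\mathbb R)$, $F_{(l',U)}=\{l'^2g: g\in H_2,\ g\ge0\text{ on }\mathbb P^2(\mathbb R),\ g|_U=0\}$. Fix distinct real lines $l,k$, $p\in l$, $q\notin l$: $F_{L_1}=F_{(l,\{q\})}$, $F_{L_2}=F_{(l,\{p\})}$, $F_{L_3}=F_{(l,k)}$,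 $F_{L_4}=F_{(l,l)}$. Further $F_Q=F_{g^2}$ with $g=x^2-y^2+z^2$; $F^{*}_{\mathcal T_1}=F_f$ with $f=(xy+z^2)^2+y^2z^2+y^4$; $F^{**}_{\mathcal T_1}=F_f$ with $f=(xy+z^2)^2+y^4$; $F^{*}_{\mathcal T_2}=F_f$ with $f=(xy+z^2)^2+y^2z^2$. *)

(* Defs.v *)
From Stdlib Require Import Reals.
Open Scope R_scope.

(* A ternary "form" is represented by its polynomial function R^3 -> R
   (polynomials over R are determined by their functions). *)
Definition form := R -> R -> R -> R.

Definition is_form (k : nat) (f : form) : Prop :=
  exists c : nat -> nat -> R, forall x y z,
    f x y z = sum_f_R0 (fun i =>
                sum_f_R0 (fun j => c i j * x ^ i * y ^ j * z ^ (k - i - j)) (k - i)) k.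

(* nonnegative on P^2(R), i.e. on R^3 (f(0)=0 for k>0). *)
Definition nonneg (f : form) : Prop := forall x y z, 0 <= f x y z.

Definition P34 (f : form) : Prop := is_form 4 f /\ nonneg f.

(* F_f : smallest face of P_{3,4} containing f *)
Definition face (f : form) : form -> Prop :=
  fun g => P34 g /\ exists eps, 0 < eps /\ P34 (fun x y z => f x y z - eps * g x y z).

(* GL_3(R): an invertible 3x3 matrix together with its inverse (indices 0,1,2). *)
Definition mat := nat -> nat -> R.
Definition is_id (P : mat) : Prop :=
  forall i j, (i < 3)%nat -> (j < 3)%nat -> P i j = if Nat.eqb i j then 1 else 0.
Definition mmul (A B : mat) : mat := fun i j => A i 0%nat * B 0%nat j + A i 1%nat * B 1%nat j + A i 2%nat * B 2%nat j.
Record GL3 := { gM : mat; gMinv : mat;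
                gInv1 : is_id (mmul gM gMinv); gInv2 : is_id (mmul gMinv gM) }.

Definition mapp (A : mat) (x y z : R) (i : nat) : R := A i 0%nat * x + A i 1%nat * y + A i 2%nat * z.

Definition act (s : GL3) (f : form) : form :=
  fun x y z => f (mapp (gMinv s) x y z 0) (mapp (gMinv s) x y z 1) (mapp (gMinv s) x y z 2).

Definition act_set (s : GL3) (G : form -> Prop) : form -> Prop :=
  fun h => exists g, G g /\ forall x y z, h x y z = act s g x y z.

Definition subset_up_to_GL (F G : form -> Prop) : Prop :=
  exists s : GL3, forall h, F h -> act_set s G h.

(* linear forms / points of P^2 as coordinate triples *)
Definition vec := (R * R * R)%type.
Definition lin (l : vec) (x y z : R) : R :=
  let '(a, b, c) := l in a * x + b * y + c * z.
Definition nonzero_vec (v : vec) : Prop := v <> (0, 0, 0).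
Definition on_line (p l : vec) : Prop := let '(x, y, z) := p in lin l x y z = 0.
Definition eval (g : form) (p : vec) : R := let '(x, y, z) := p in g x y z.
Definition proportional (l k : vec) : Prop := exists t : R, k = (let '(a,b,c) := l in (t*a, t*b, t*c)).

(* projective linear subspaces used: a point, or a line *)
Definition vanish_at (g : form) (q : vec) : Prop := eval g q = 0.
Definition vanish_on_line (g : form) (k : vec) : Prop :=
  forall x y z, lin k x y z = 0 -> g x y z = 0.

Definition F_lU (l' : vec) (U : form -> Prop) : form -> Prop :=
  fun h => exists g, is_form 2 g /\ nonneg g /\ U g /\
    forall x y z, h x y z = (lin l' x y z) ^ 2 * g x y z.

Definition F_L1 (l q : vec) := F_lU l (fun g => vanish_at g q).
Definition F_L2 (l p : vec) := F_lU l (fun g => vanish_at g p).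
Definition F_L3 (l k : vec) := F_lU l (fun g => vanish_on_line g k).
Definition F_L4 (l : vec) := F_lU l (fun g => vanish_on_line g l).

Definition F_Q : form -> Prop := face (fun x y z => (x^2 - y^2 + z^2) ^ 2).
Definition F_T1s : form -> Prop := face (fun x y z => (x*y + z^2)^2 + y^2*z^2 + y^4).
Definition F_T1ss : form -> Prop := face (fun x y z => (x*y + z^2)^2 + y^4).
Definition F_T2s : form -> Prop := face (fun x y z => (x*y + z^2)^2 + y^2*z^2).

(* Main.v *)
Require Import Defs.
From Stdlib Require Import Reals Lra Lia Psatz.
Open Scope R_scope.

Lemma form_ext k (f g : form) : is_form k f -> (forall x y z, g x y z = f x y z) -> is_form k g.
Proof. intros [c Hc] H. exists c. intros. rewrite H. apply Hc. Qed.

Lemma form_deg a b (f : form) : a = b -> is_form a f -> is_form b f.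
Proof. intros ->; auto. Qed.

Lemma sum_plus2 (F G : nat -> R) n : sum_f_R0 (fun i => F i + G i) n = sum_f_R0 F n + sum_f_R0 G n.
Proof. induction n; simpl; [ring| rewrite IHn; ring]. Qed.

Lemma sum_scal2 (F : nat -> R) a n : sum_f_R0 (fun i => a * F i) n = a * sum_f_R0 F n.
Proof. induction n; simpl; [ring| rewrite IHn; ring]. Qed.

Lemma sum_ext2 (F G : nat -> R) n : (forall i, (i <= n)%nat -> F i = G i) -> sum_f_R0 F n = sum_f_R0 G n.
Proof. induction n; intros H; simpl. apply H; lia. rewrite IHn by (intros; apply H; lia). rewrite H; auto. Qed.

Lemma form_add k (f g : form) : is_form k f -> is_form k g -> is_form k (fun x y z => f x y z + g x y z).
Proof.
  intros [c Hc] [d Hd]. exists (fun i j => c i j + d i j). intros. rewrite Hc, Hd.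
  rewrite <- sum_plus2. apply sum_ext2; intros i _. rewrite <- sum_plus2. apply sum_ext2; intros; ring.
Qed.

Lemma form_scal k a (f : form) : is_form k f -> is_form k (fun x y z => a * f x y z).
Proof.
  intros [c Hc]. exists (fun i j => a * c i j). intros. rewrite Hc.
  rewrite <- sum_scal2. apply sum_ext2; intros i _. rewrite <- sum_scal2. apply sum_ext2; intros; ring.
Qed.

Lemma sum_single (F : nat -> R) i n : (forall a, a <> i -> F a = 0) -> (i <= n)%nat -> sum_f_R0 F n = F i.
Proof.
  intros H. induction n; intros Hi; simpl.
  - replace i with 0%nat by lia; auto.
  - destruct (Nat.eq_dec i (S n)) as [->|Hne].
    + rewrite (sum_ext2 F (fun _ => 0)). { clear. induction n; simpl; lra. }
      intros; apply H; lia.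
    + rewrite IHn by lia. rewrite (H (S n)) by lia. ring.
Qed.

Lemma sum_zero n : sum_f_R0 (fun _ => 0) n = 0.
Proof. induction n; simpl; lra. Qed.

Lemma form_mono k i j : (i + j <= k)%nat -> is_form k (fun x y z => x^i * y^j * z^(k-i-j)).
Proof.
  intros H. exists (fun a b => if andb (Nat.eqb a i) (Nat.eqb b j) then 1 else 0). intros.
  rewrite (sum_single _ i).
  2:{ intros a0 Ha. rewrite (sum_ext2 _ (fun _ => 0)). apply sum_zero.
      intros; apply Nat.eqb_neq in Ha; rewrite Ha; simpl; ring. }
  2: lia.
  rewrite (sum_single _ j).
  2:{ intros b Hb; apply Nat.eqb_neq in Hb. rewrite Nat.eqb_refl, Hb; simpl; ring. }
  2: lia.
  rewrite !Nat.eqb_refl. simpl. ring.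
Qed.

Lemma form_sum k n (F : nat -> form) : (forall i, (i <= n)%nat -> is_form k (F i)) ->
  is_form k (fun x y z => sum_f_R0 (fun i => F i x y z) n).
Proof.
  induction n; intros H; simpl.
  - apply H; lia.
  - apply (form_add k (fun x y z => sum_f_R0 (fun i => F i x y z) n) (F (S n))).
    apply IHn; intros; apply H; lia. apply H; lia.
Qed.

Lemma sum_mul_r (F : nat -> R) n a : sum_f_R0 F n * a = sum_f_R0 (fun i => F i * a) n.
Proof. induction n; simpl; [ring| rewrite <- IHn; ring]. Qed.

Lemma form_mul a b (f g : form) : is_form a f -> is_form b g -> is_form (a + b) (fun x y z => f x y z * g x y z).
Proof.
  intros [c Hc] [d Hd].
  apply (form_ext _ (fun x y z => sum_f_R0 (fun i => sum_f_R0 (fun j =>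
     sum_f_R0 (fun i' => sum_f_R0 (fun j' =>
       (c i j * d i' j') * (x^(i+i') * y^(j+j') * z^((a+b) - (i+i') - (j+j')))) (b - i')) b) (a - i)) a)).
  2:{ intros. rewrite Hc, Hd. rewrite sum_mul_r. apply sum_ext2; intros i Hi.
      rewrite sum_mul_r. apply sum_ext2; intros j Hj.
      rewrite <- sum_scal2. apply sum_ext2; intros i' Hi'.
      rewrite <- sum_scal2. apply sum_ext2; intros j' Hj'.
      replace ((a+b) - (i+i') - (j+j'))%nat with ((a - i - j) + (b - i' - j'))%nat by lia.
      rewrite !pow_add. ring. }
  apply (form_sum _ _ (fun i x y z => _)); intros i Hi.
  apply (form_sum _ _ (fun j x y z => _)); intros j Hj.
  apply (form_sum _ _ (fun i' x y z => _)); intros i' Hi'.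
  apply (form_sum _ _ (fun j' x y z => _)); intros j' Hj'.
  apply form_scal. apply form_mono. lia.
Qed.

Lemma form_lin a b c : is_form 1 (fun x y z => a*x + b*y + c*z).
Proof.
  apply (form_ext _ (fun x y z => (a * (x^1*y^0*z^(1-1-0)) + b * (x^0*y^1*z^(1-0-1))) + c * (x^0*y^0*z^(1-0-0)))).
  repeat apply form_add; apply form_scal; apply form_mono; lia.
  intros; simpl; ring.
Qed.

Lemma form_pow n (f : form) : is_form 1 f -> is_form n (fun x y z => (f x y z)^n).
Proof.
  intros H. induction n.
  - apply (form_ext _ (fun x y z => x^0*y^0*z^(0-0-0))). apply form_mono; lia. intros; simpl; ring.
  - apply (form_ext _ (fun x y z => f x y z * (f x y z)^n)). apply (form_mul 1 n); auto.
    intros; simpl; ring.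
Qed.

Lemma form_comp k (f : form) (a1 b1 c1 a2 b2 c2 a3 b3 c3 : R) : is_form k f ->
  is_form k (fun x y z => f (a1*x+b1*y+c1*z) (a2*x+b2*y+c2*z) (a3*x+b3*y+c3*z)).
Proof.
  intros [c Hc].
  eapply form_ext; [| intros; rewrite Hc; reflexivity].
  apply (form_sum _ _ (fun i x y z => _)); intros i Hi.
  apply (form_sum _ _ (fun j x y z => _)); intros j Hj.
  eapply form_ext; [| intros; rewrite Rmult_assoc, Rmult_assoc; reflexivity].
  apply form_scal.
  apply (form_deg (i + (j + (k - i - j)))). lia.
  apply (form_mul i (j + (k-i-j)) (fun x y z => (a1*x+b1*y+c1*z)^i)).
  apply form_pow, form_lin.
  apply (form_mul j (k-i-j) (fun x y z => (a2*x+b2*y+c2*z)^j)); apply form_pow, form_lin.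
Qed.

Definition mk3 (a b c d e f g h i : R) : mat := fun r s =>
  match r, s with
  | 0, 0 => a | 0, 1 => b | 0, _ => c
  | 1, 0 => d | 1, 1 => e | 1, _ => f
  | _, 0 => g | _, 1 => h | _, _ => i end%nat.

Definition det3 (N : mat) : R :=
  N 0%nat 0%nat * (N 1%nat 1%nat * N 2%nat 2%nat - N 1%nat 2%nat * N 2%nat 1%nat)
  - N 0%nat 1%nat * (N 1%nat 0%nat * N 2%nat 2%nat - N 1%nat 2%nat * N 2%nat 0%nat)
  + N 0%nat 2%nat * (N 1%nat 0%nat * N 2%nat 1%nat - N 1%nat 1%nat * N 2%nat 0%nat).

Definition inv3 (N : mat) : mat :=
  mk3 ((N 1%nat 1%nat * N 2%nat 2%nat - N 1%nat 2%nat * N 2%nat 1%nat) / det3 N)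
      ((N 0%nat 2%nat * N 2%nat 1%nat - N 0%nat 1%nat * N 2%nat 2%nat) / det3 N)
      ((N 0%nat 1%nat * N 1%nat 2%nat - N 0%nat 2%nat * N 1%nat 1%nat) / det3 N)
      ((N 1%nat 2%nat * N 2%nat 0%nat - N 1%nat 0%nat * N 2%nat 2%nat) / det3 N)
      ((N 0%nat 0%nat * N 2%nat 2%nat - N 0%nat 2%nat * N 2%nat 0%nat) / det3 N)
      ((N 0%nat 2%nat * N 1%nat 0%nat - N 0%nat 0%nat * N 1%nat 2%nat) / det3 N)
      ((N 1%nat 0%nat * N 2%nat 1%nat - N 1%nat 1%nat * N 2%nat 0%nat) / det3 N)
      ((N 0%nat 1%nat * N 2%nat 0%nat - N 0%nat 0%nat * N 2%nat 1%nat) / det3 N)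
      ((N 0%nat 0%nat * N 1%nat 1%nat - N 0%nat 1%nat * N 1%nat 0%nat) / det3 N).

Lemma inv3_ok (N : mat) : det3 N <> 0 -> is_id (mmul N (inv3 N)) /\ is_id (mmul (inv3 N) N).
Proof.
  intros H. unfold det3 in H. split; intros i j Hi Hj;
  (destruct i as [|[|[|i]]]; [| | | lia]); (destruct j as [|[|[|j]]]; [| | | lia]);
  unfold mmul, inv3, mk3, det3; simpl; field; auto.
Qed.

Lemma mapp_id (A B : mat) x y z : is_id (mmul A B) ->
  mapp A (mapp B x y z 0) (mapp B x y z 1) (mapp B x y z 2) 0 = x /\
  mapp A (mapp B x y z 0) (mapp B x y z 1) (mapp B x y z 2) 1 = y /\
  mapp A (mapp B x y z 0) (mapp B x y z 1) (mapp B x y z 2) 2 = z.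
Proof.
  intros H.
  assert (E : forall i, mapp A (mapp B x y z 0) (mapp B x y z 1) (mapp B x y z 2) i =
     mmul A B i 0%nat * x + mmul A B i 1%nat * y + mmul A B i 2%nat * z) by (intros; unfold mapp, mmul; ring).
  rewrite !E, !H by lia. simpl. repeat split; ring.
Qed.

Definition pull (s : GL3) (h : form) : form := fun x y z =>
  h (mapp (gM s) x y z 0) (mapp (gM s) x y z 1) (mapp (gM s) x y z 2).

Lemma act_pull s h : forall x y z, h x y z = act s (pull s h) x y z.
Proof.
  intros. unfold act, pull. destruct (mapp_id (gM s) (gMinv s) x y z (gInv1 s)) as [-> [-> ->]]. auto.
Qed.

Lemma act_inv s h g : (forall x y z, h x y z = act s g x y z) -> forall x y z, g x y z = pull s h x y z.
Proof.
  intros H x y z. unfold pull. rewrite H. unfold act.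
  destruct (mapp_id (gMinv s) (gM s) x y z (gInv2 s)) as [-> [-> ->]]. auto.
Qed.

Lemma pull_form s k h : is_form k h -> is_form k (pull s h).
Proof. intros H. unfold pull, mapp. apply form_comp; auto. Qed.

Lemma sub_intro (F G : form -> Prop) (s : GL3) : (forall h, F h -> G (pull s h)) -> subset_up_to_GL F G.
Proof. intros H. exists s. intros h Hh. exists (pull s h). split; auto. apply act_pull. Qed.

Lemma cont_le (psi : R -> R) : continuity_pt psi 0 -> (forall s, 0 < s < 1 -> psi s <= 0) -> psi 0 <= 0.
Proof.
  intros Hc H. destruct (Rle_or_lt (psi 0) 0) as [|Hp]; auto.
  destruct (Hc (psi 0) Hp) as [d [Hd Hd2]].
  set (s := Rmin (d/2) (1/2)).
  assert (0 < s) by (unfold s; apply Rmin_pos; lra).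
  assert (s <= d/2) by apply Rmin_l. assert (s <= 1/2) by apply Rmin_r.
  specialize (Hd2 s). assert (psi s <= 0) by (apply H; lra).
  assert (Rabs (psi s - psi 0) < psi 0).
  { apply Hd2. split. split. exact I. lra. simpl. unfold R_dist. rewrite Rminus_0_r, Rabs_right; lra. }
  rewrite Rabs_left1 in H4 by lra. lra.
Qed.

Lemma step0 (eps C a : R) (Q : R -> R) m : continuity_pt Q 0 -> 0 < eps ->
  (forall s, 0 < s < 1 -> eps * (a + s * Q s)^2 <= C * s^(2 * S m)) ->
  a = 0 /\ (forall s, 0 < s < 1 -> eps * (Q s)^2 <= C * s^(2 * m)).
Proof.
  intros HQ He H.
  assert (a = 0).
  { assert (Hc : continuity_pt (fun s => eps * (a + s * Q s)^2 - C * s^(2 * S m)) 0) by reg.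
    pose proof (cont_le _ Hc) as Hl. cbv beta in Hl. rewrite pow_i in Hl by lia.
    assert (eps * (a + 0 * Q 0)^2 - C * 0 <= 0) by (apply Hl; intros s Hs; specialize (H s Hs); lra).
    assert (eps * a^2 <= 0) by (ring_simplify in H0; lra).
    destruct (Req_dec a 0); auto. exfalso. pose proof (Rsqr_pos_lt a H2). unfold Rsqr in H3. nra. }
  split; auto. subst a. intros s Hs. specialize (H s Hs).
  replace (2 * S m)%nat with (S (S (2 * m))) in H by lia.
  change (s^(S (S (2*m)))) with (s*(s*s^(2*m))) in H.
  assert (0 < s * s) by nra.
  apply Rmult_le_reg_l with (s * s); auto.
  replace (s * s * (eps * Q s ^ 2)) with (eps * ((0 + s * Q s) ^ 2)) by ring.
  eapply Rle_trans. apply H. right. ring.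
Qed.

Lemma low_gen (eps C p0 p1 p2 p3 p4 : R) m : 0 < eps ->
  (forall s, 0 < s < 1 -> eps * (p0 + p1*s + p2*s^2 + p3*s^3 + p4*s^4)^2 <= C * s^(2 * S m)) ->
  p0 = 0 /\ (forall s, 0 < s < 1 -> eps * (p1 + p2*s + p3*s^2 + p4*s^3)^2 <= C * s^(2 * m)).
Proof.
  intros He H.
  apply (step0 eps C p0 (fun s => p1 + p2*s + p3*s^2 + p4*s^3)); auto. reg.
  intros s Hs. eapply Rle_trans; [|apply (H s Hs)]. right. ring.
Qed.

Lemma low4 (eps p0 p1 p2 p3 p4 : R) : 0 < eps ->
  (forall s, 0 < s < 1 -> eps * (p0 + p1*s + p2*s^2 + p3*s^3 + p4*s^4)^2 <= s^8) ->
  p0 = 0 /\ p1 = 0 /\ p2 = 0 /\ p3 = 0.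
Proof.
  intros He H.
  destruct (low_gen eps 1 p0 p1 p2 p3 p4 3 He) as [H0 H1].
  { intros s Hs. rewrite Rmult_1_l. apply H; auto. }
  destruct (low_gen eps 1 p1 p2 p3 p4 0 2 He) as [H2 H3].
  { intros s Hs. eapply Rle_trans; [|apply (H1 s Hs)]. right. ring. }
  destruct (low_gen eps 1 p2 p3 p4 0 0 1 He) as [H4 H5].
  { intros s Hs. eapply Rle_trans; [|apply (H3 s Hs)]. right. ring. }
  destruct (low_gen eps 1 p3 p4 0 0 0 0 He) as [H6 H7].
  { intros s Hs. eapply Rle_trans; [|apply (H5 s Hs)]. right. ring. }
  auto.
Qed.

Lemma low3 (eps p0 p1 p2 p3 p4 : R) : 0 < eps ->
  (forall s, 0 < s < 1 -> eps * (p0 + p1*s + p2*s^2 + p3*s^3 + p4*s^4)^2 <= 2 * s^6) ->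
  p0 = 0 /\ p1 = 0 /\ p2 = 0.
Proof.
  intros He H.
  destruct (low_gen eps 2 p0 p1 p2 p3 p4 2 He) as [H0 H1].
  { intros s Hs. apply H; auto. }
  destruct (low_gen eps 2 p1 p2 p3 p4 0 1 He) as [H2 H3].
  { intros s Hs. eapply Rle_trans; [|apply (H1 s Hs)]. right. ring. }
  destruct (low_gen eps 2 p2 p3 p4 0 0 0 He) as [H4 H5].
  { intros s Hs. eapply Rle_trans; [|apply (H3 s Hs)]. right. ring. }
  auto.
Qed.

Definition rowM (s : GL3) (a b c : R) (j : nat) : R :=
  a * gM s 0%nat j + b * gM s 1%nat j + c * gM s 2%nat j.

Lemma row_recon (s : GL3) a b c :
  a = rowM s a b c 0 * gMinv s 0%nat 0%nat + rowM s a b c 1 * gMinv s 1%nat 0%nat + rowM s a b c 2 * gMinv s 2%nat 0%nat /\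
  b = rowM s a b c 0 * gMinv s 0%nat 1%nat + rowM s a b c 1 * gMinv s 1%nat 1%nat + rowM s a b c 2 * gMinv s 2%nat 1%nat /\
  c = rowM s a b c 0 * gMinv s 0%nat 2%nat + rowM s a b c 1 * gMinv s 1%nat 2%nat + rowM s a b c 2 * gMinv s 2%nat 2%nat.
Proof.
  pose proof (gInv1 s) as H.
  assert (E : forall r, rowM s a b c 0 * gMinv s 0%nat r + rowM s a b c 1 * gMinv s 1%nat r + rowM s a b c 2 * gMinv s 2%nat r
     = a * mmul (gM s) (gMinv s) 0%nat r + b * mmul (gM s) (gMinv s) 1%nat r + c * mmul (gM s) (gMinv s) 2%nat r)
    by (intros; unfold rowM, mmul; ring).
  rewrite !E, !H by lia. simpl. repeat split; ring.
Qed.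

Lemma row_zero (s : GL3) a b c : rowM s a b c 0 = 0 -> rowM s a b c 1 = 0 -> rowM s a b c 2 = 0 ->
  a = 0 /\ b = 0 /\ c = 0.
Proof.
  intros H0 H1 H2. destruct (row_recon s a b c) as [Ea [Eb Ec]].
  rewrite H0, H1, H2 in *. repeat split; lra.
Qed.

Lemma pull_lin (s : GL3) a b c x y z :
  lin (a, b, c) (mapp (gM s) x y z 0) (mapp (gM s) x y z 1) (mapp (gM s) x y z 2)
  = rowM s a b c 0 * x + rowM s a b c 1 * y + rowM s a b c 2 * z.
Proof. unfold lin, mapp, rowM. ring. Qed.

Lemma face_pull (f : form) (s : GL3) (h : form) : act_set s (face f) h ->
  exists eps, 0 < eps /\ forall x y z, 0 <= f x y z - eps * pull s h x y z.
Proof.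
  intros [g [[_ [eps [He [_ Hn]]]] Hact]]. exists eps. split; auto. intros.
  rewrite <- (act_inv s h g Hact). apply Hn.
Qed.

Lemma nz_vec a b c : nonzero_vec (a, b, c) -> ~ (a = 0 /\ b = 0 /\ c = 0).
Proof. intros H [-> [-> ->]]. apply H; auto. Qed.

Lemma sq0 (e a : R) : 0 < e -> 0 <= - (e * a^2) -> a = 0.
Proof.
  intros He H. destruct (Req_dec a 0); auto. pose proof (Rsqr_pos_lt a H0). unfold Rsqr in H1. nra.
Qed.

Lemma pow0 (a : R) n : a ^ n = 0 -> a = 0.
Proof. intros H. destruct (Req_dec a 0); auto. exfalso. apply (pow_nonzero a n H0 H). Qed.


Lemma part3b (l : vec) : nonzero_vec l -> ~ subset_up_to_GL (F_L4 l) F_T2s.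
Proof.
  destruct l as [[a b] c]. intros hl [s Hs].
  set (h := fun x y z => (lin (a,b,c) x y z)^2 * (lin (a,b,c) x y z)^2).
  assert (Hh : F_L4 (a,b,c) h).
  { exists (fun x y z => (lin (a,b,c) x y z)^2). repeat split.
    - apply form_pow. simpl. apply form_lin.
    - intros x y z. apply pow2_ge_0.
    - intros x y z E. rewrite E. ring. }
  destruct (face_pull _ s h (Hs h Hh)) as [eps [He Hn]].
  unfold pull, h in Hn. 
  assert (Hn' : forall x y z, 0 <= (x*y+z^2)^2 + y^2*z^2 - eps * (rowM s a b c 0 * x + rowM s a b c 1 * y + rowM s a b c 2 * z)^4).
  { intros x y z. specialize (Hn x y z). rewrite pull_lin in Hn. lra. }
  clear Hn.
  set (r0 := rowM s a b c 0) in *. set (r1 := rowM s a b c 1) in *. set (r2 := rowM s a b c 2) in *.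
  assert (E0 : r0 = 0).
  { specialize (Hn' 1 0 0). apply (pow0 _ 2). apply (sq0 eps (r0^2)); auto. ring_simplify in Hn'. ring_simplify. lra. }
  assert (E1 : r1 = 0).
  { specialize (Hn' 0 1 0). apply (pow0 _ 2). apply (sq0 eps (r1^2)); auto. ring_simplify in Hn'. ring_simplify. lra. }
  assert (E2 : r2^2 = 0).
  { destruct (low3 eps 0 0 (r2^2) 0 0 He) as [_ [_ H]]; auto.
    intros t Ht. specialize (Hn' 1 (-t^2) t). rewrite E0, E1 in Hn'. nra. }
  apply (nz_vec a b c hl). apply (row_zero s); auto. fold r2. apply (pow0 _ 2); auto.
Qed.

Lemma prop_case (s : GL3) a b c d e f :
  rowM s a b c 0 = 0 -> rowM s a b c 2 = 0 -> rowM s d e f 0 = 0 -> rowM s d e f 2 = 0 ->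
  rowM s a b c 1 <> 0 -> proportional (a,b,c) (d,e,f).
Proof.
  intros H0 H2 K0 K2 H1.
  destruct (row_recon s a b c) as [Ea [Eb Ec]]. destruct (row_recon s d e f) as [Ed [Ee Ef]].
  rewrite H0, H2 in *. rewrite K0, K2 in *.
  set (R1 := rowM s a b c 1) in *. set (U1 := rowM s d e f 1) in *.
  exists (U1 / R1). simpl.
  assert (A1 : a = R1 * gMinv s 1%nat 0%nat) by lra.
  assert (A2 : b = R1 * gMinv s 1%nat 1%nat) by lra.
  assert (A3 : c = R1 * gMinv s 1%nat 2%nat) by lra.
  assert (D1 : d = U1 * gMinv s 1%nat 0%nat) by lra.
  assert (D2 : e = U1 * gMinv s 1%nat 1%nat) by lra.
  assert (D3 : f = U1 * gMinv s 1%nat 2%nat) by lra.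
  rewrite D1, D2, D3, A1, A2, A3. f_equal; [f_equal|]; field; auto.
Qed.

Lemma case_lemma r0 r1 r2 u0 u1 u2 :
  r0*u0 = 0 -> r0*u2 + r2*u0 = 0 -> -r0*u1 + r2*u2 - r1*u0 = 0 -> -r2*u1 - r1*u2 = 0 ->
  ~ (r0 = 0 /\ r1 = 0 /\ r2 = 0) -> ~ (u0 = 0 /\ u1 = 0 /\ u2 = 0) ->
  r0 = 0 /\ r2 = 0 /\ u0 = 0 /\ u2 = 0.
Proof.
  intros P0 P1 P2 P3 Hr Hu.
  destruct (Req_dec r0 0) as [A0|A0].
  - subst r0. destruct (Req_dec r2 0) as [A2|A2].
    + subst r2. assert (r1 <> 0) by tauto.
      assert (u0 = 0) by (apply (Rmult_eq_reg_l r1); [lra|auto]).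
      assert (u2 = 0) by (apply (Rmult_eq_reg_l r1); [lra|auto]). auto.
    + assert (u0 = 0) by (apply (Rmult_eq_reg_l r2); [lra|auto]). subst u0.
      assert (u2 = 0) by (apply (Rmult_eq_reg_l r2); [lra|auto]). subst u2.
      assert (u1 = 0) by (apply (Rmult_eq_reg_l r2); [lra|auto]). tauto.
  - assert (u0 = 0) by (apply (Rmult_eq_reg_l r0); [lra|auto]). subst u0.
    assert (u2 = 0) by (apply (Rmult_eq_reg_l r0); [lra|auto]). subst u2.
    assert (u1 = 0) by (apply (Rmult_eq_reg_l r0); [lra|auto]). tauto.
Qed.

Lemma part2b (l k : vec) : nonzero_vec l -> nonzero_vec k -> ~ proportional l k ->
  ~ subset_up_to_GL (F_L3 l k) F_T1ss.
Proof.
  destruct l as [[a b] c]. destruct k as [[d e] f]. intros hl hk hlk [s Hs].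
  set (h := fun x y z => (lin (a,b,c) x y z)^2 * (lin (d,e,f) x y z)^2).
  assert (Hh : F_L3 (a,b,c) (d,e,f) h).
  { exists (fun x y z => (lin (d,e,f) x y z)^2). repeat split.
    - apply form_pow. simpl. apply form_lin.
    - intros x y z. apply pow2_ge_0.
    - intros x y z E. rewrite E. ring. }
  destruct (face_pull _ s h (Hs h Hh)) as [eps [He Hn]].
  unfold pull, h in Hn.
  assert (Hn' : forall x y z, 0 <= (x*y+z^2)^2 + y^4 - eps * ((rowM s a b c 0 * x + rowM s a b c 1 * y + rowM s a b c 2 * z) * (rowM s d e f 0 * x + rowM s d e f 1 * y + rowM s d e f 2 * z))^2).
  { intros x y z. specialize (Hn x y z). rewrite !pull_lin in Hn. lra. }
  clear Hn.
  set (r0 := rowM s a b c 0) in *. set (r1 := rowM s a b c 1) in *. set (r2 := rowM s a b c 2) in *.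
  set (u0 := rowM s d e f 0) in *. set (u1 := rowM s d e f 1) in *. set (u2 := rowM s d e f 2) in *.
  destruct (low4 eps (r0*u0) (r0*u2 + r2*u0) (-r0*u1 + r2*u2 - r1*u0) (-r2*u1 - r1*u2) (r1*u1) He)
    as [P0 [P1 [P2 P3]]].
  { intros t Ht. specialize (Hn' 1 (-t^2) t).
    replace (r0*u0 + (r0*u2 + r2*u0)*t + (-r0*u1 + r2*u2 - r1*u0)*t^2 + (-r2*u1 - r1*u2)*t^3 + (r1*u1)*t^4)
      with ((r0 * 1 + r1 * - t ^ 2 + r2 * t) * (u0 * 1 + u1 * - t ^ 2 + u2 * t)) by ring.
    replace (t^8) with ((1 * - t ^ 2 + t ^ 2) ^ 2 + (- t ^ 2) ^ 4) by ring. lra. }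
  pose proof (nz_vec _ _ _ hl) as Nl. pose proof (nz_vec _ _ _ hk) as Nk.
  assert (Hr : ~ (r0 = 0 /\ r1 = 0 /\ r2 = 0)) by (intros [? [? ?]]; apply Nl, (row_zero s); auto).
  assert (Hu : ~ (u0 = 0 /\ u1 = 0 /\ u2 = 0)) by (intros [? [? ?]]; apply Nk, (row_zero s); auto).
  destruct (case_lemma r0 r1 r2 u0 u1 u2) as [A0 [A2 [B0 B2]]]; auto; try lra.
  apply hlk. apply (prop_case s); auto.
Qed.

Lemma col0_nz (s : GL3) : ~ (gM s 0%nat 0%nat = 0 /\ gM s 1%nat 0%nat = 0 /\ gM s 2%nat 0%nat = 0).
Proof.
  intros [H0 [H1 H2]]. pose proof (gInv2 s 0%nat 0%nat ltac:(lia) ltac:(lia)) as E.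
  unfold mmul in E. rewrite H0, H1, H2 in E. simpl in E. lra.
Qed.

Lemma low_prod eps (r0 r1 r2 a0 a1 a2 : R) : 0 < eps ->
  (forall t, 0 < t < 1 -> eps * ((r0 * 1 + r1 * - t^2 + r2 * t) * (a0 * 1 + a1 * - t^2 + a2 * t))^2 <= 2 * t^6) ->
  r0 * a0 = 0 /\ r0*a2 + r2*a0 = 0 /\ -r0*a1 + r2*a2 - r1*a0 = 0.
Proof.
  intros He H.
  apply (low3 eps _ _ _ (-r2*a1 - r1*a2) (r1*a1) He).
  intros t Ht. eapply Rle_trans; [|apply (H t Ht)]. right. ring.
Qed.

Lemma mul0r (x y : R) : x * y = 0 -> y <> 0 -> x = 0.
Proof. intros H Hy. destruct (Rmult_integral _ _ H); auto. contradiction. Qed.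

Lemma part1b (l q : vec) : nonzero_vec l -> nonzero_vec q -> ~ on_line q l ->
  ~ subset_up_to_GL (F_L1 l q) F_T1s.
Proof.
  destruct l as [[a b] c]. destruct q as [[q1 q2] q3]. intros hl hq hql [s Hs].
  simpl in hql.
  set (h := fun x y z => (lin (a,b,c) x y z)^2 *
     ((lin (0,q3,-q2) x y z)^2 + (lin (-q3,0,q1) x y z)^2 + (lin (q2,-q1,0) x y z)^2)).
  assert (Hh : F_L1 (a,b,c) (q1,q2,q3) h).
  { exists (fun x y z => (lin (0,q3,-q2) x y z)^2 + (lin (-q3,0,q1) x y z)^2 + (lin (q2,-q1,0) x y z)^2).
    repeat split.
    - repeat apply form_add; apply form_pow; simpl; apply form_lin.
    - intros x y z. pose proof (pow2_ge_0 (lin (0,q3,-q2) x y z)).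
      pose proof (pow2_ge_0 (lin (-q3,0,q1) x y z)). pose proof (pow2_ge_0 (lin (q2,-q1,0) x y z)). lra.
    - unfold vanish_at, eval, lin. ring. }
  destruct (face_pull _ s h (Hs h Hh)) as [eps [He Hn]].
  unfold pull, h in Hn. setoid_rewrite pull_lin in Hn.
  set (r0 := rowM s a b c 0) in *. set (r1 := rowM s a b c 1) in *. set (r2 := rowM s a b c 2) in *.
  set (a0 := rowM s 0 q3 (-q2) 0) in *. set (a1 := rowM s 0 q3 (-q2) 1) in *. set (a2 := rowM s 0 q3 (-q2) 2) in *.
  set (b0 := rowM s (-q3) 0 q1 0) in *. set (b1 := rowM s (-q3) 0 q1 1) in *. set (b2 := rowM s (-q3) 0 q1 2) in *.
  set (c0 := rowM s q2 (-q1) 0 0) in *. set (c1 := rowM s q2 (-q1) 0 1) in *. set (c2 := rowM s q2 (-q1) 0 2) in *.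
  assert (Hb : forall t, 0 < t < 1 ->
     eps * ((r0 * 1 + r1 * - t^2 + r2 * t)^2 * ((a0 * 1 + a1 * - t^2 + a2 * t)^2 + (b0 * 1 + b1 * - t^2 + b2 * t)^2 + (c0 * 1 + c1 * - t^2 + c2 * t)^2)) <= 2 * t^6).
  { intros t Ht. specialize (Hn 1 (-t^2) t).
    assert (t^8 <= t^6).
    { replace (t^8) with (t^6 * (t*t)) by ring. pose proof (pow_lt t 6 ltac:(lra)).
      assert (t * t < 1) by nra. nra. }
    assert (E : (1 * - t ^ 2 + t ^ 2) ^ 2 + (- t ^ 2) ^ 2 * t ^ 2 + (- t ^ 2) ^ 4 = t^6 + t^8) by ring.
    lra. }
  assert (LA := low_prod eps r0 r1 r2 a0 a1 a2 He).
  assert (LB := low_prod eps r0 r1 r2 b0 b1 b2 He).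
  assert (LC := low_prod eps r0 r1 r2 c0 c1 c2 He).
  destruct LA as [A0 [A1 A2]].
  { intros t Ht. eapply Rle_trans; [|apply (Hb t Ht)]. apply Rmult_le_compat_l; [lra|].
    rewrite Rpow_mult_distr. apply Rmult_le_compat_l. apply pow2_ge_0.
    pose proof (pow2_ge_0 (b0 * 1 + b1 * - t^2 + b2 * t)). pose proof (pow2_ge_0 (c0 * 1 + c1 * - t^2 + c2 * t)). lra. }
  destruct LB as [B0 [B1 B2]].
  { intros t Ht. eapply Rle_trans; [|apply (Hb t Ht)]. apply Rmult_le_compat_l; [lra|].
    rewrite Rpow_mult_distr. apply Rmult_le_compat_l. apply pow2_ge_0.
    pose proof (pow2_ge_0 (a0 * 1 + a1 * - t^2 + a2 * t)). pose proof (pow2_ge_0 (c0 * 1 + c1 * - t^2 + c2 * t)). lra. }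
  destruct LC as [C0 [C1 C2]].
  { intros t Ht. eapply Rle_trans; [|apply (Hb t Ht)]. apply Rmult_le_compat_l; [lra|].
    rewrite Rpow_mult_distr. apply Rmult_le_compat_l. apply pow2_ge_0.
    pose proof (pow2_ge_0 (a0 * 1 + a1 * - t^2 + a2 * t)). pose proof (pow2_ge_0 (b0 * 1 + b1 * - t^2 + b2 * t)). lra. }
  pose proof (nz_vec _ _ _ hl) as Nl. pose proof (nz_vec _ _ _ hq) as Nq.
  assert (Hr : ~ (r0 = 0 /\ r1 = 0 /\ r2 = 0)) by (intros [? [? ?]]; apply Nl, (row_zero s); auto).
  destruct (Req_dec r0 0) as [Z|Z].
  - rewrite Z in *.
    destruct (Req_dec a0 0) as [Za|Za].
    2:{ apply Hr. assert (E2 : r2 = 0) by (apply (mul0r _ a0); [lra|auto]). rewrite E2 in *.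
        assert (r1 = 0) by (apply (mul0r _ a0); [lra|auto]). auto. }
    destruct (Req_dec b0 0) as [Zb|Zb].
    2:{ apply Hr. assert (E2 : r2 = 0) by (apply (mul0r _ b0); [lra|auto]). rewrite E2 in *.
        assert (r1 = 0) by (apply (mul0r _ b0); [lra|auto]). auto. }
    destruct (Req_dec c0 0) as [Zc|Zc].
    2:{ apply Hr. assert (E2 : r2 = 0) by (apply (mul0r _ c0); [lra|auto]). rewrite E2 in *.
        assert (r1 = 0) by (apply (mul0r _ c0); [lra|auto]). auto. }
    (* m1 x q = 0 and l.m1 = 0 *)
    set (m0 := gM s 0%nat 0%nat) in *. set (m1 := gM s 1%nat 0%nat) in *. set (m2 := gM s 2%nat 0%nat) in *.
    assert (Id : (m0^2 + m1^2 + m2^2) * (a*q1 + b*q2 + c*q3) =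
       r0 * (m0*q1 + m1*q2 + m2*q3) - (a * (m1 * c0 - m2 * b0) + b * (m2 * a0 - m0 * c0) + c * (m0 * b0 - m1 * a0))).
    { unfold r0, a0, b0, c0, m0, m1, m2, rowM. ring. }
    rewrite Za, Zb, Zc, Z in Id.
    assert (E : (m0^2 + m1^2 + m2^2) * (a*q1 + b*q2 + c*q3) = 0) by (rewrite Id; ring).
    apply Rmult_integral in E. destruct E as [E|E]; [|contradiction].
    apply (col0_nz s). fold m0 m1 m2.
    pose proof (pow2_ge_0 m0). pose proof (pow2_ge_0 m1). pose proof (pow2_ge_0 m2).
    repeat split; apply (pow0 _ 2); lra.
  - assert (Ea0 : a0 = 0) by (apply (mul0r _ r0); [lra|auto]). rewrite Ea0 in *.
    assert (Ea2 : a2 = 0) by (apply (mul0r _ r0); [lra|auto]). rewrite Ea2 in *.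
    assert (Ea1 : a1 = 0) by (apply (mul0r _ r0); [lra|auto]).
    assert (Eb0 : b0 = 0) by (apply (mul0r _ r0); [lra|auto]). rewrite Eb0 in *.
    assert (Eb2 : b2 = 0) by (apply (mul0r _ r0); [lra|auto]). rewrite Eb2 in *.
    assert (Eb1 : b1 = 0) by (apply (mul0r _ r0); [lra|auto]).
    destruct (row_zero s 0 q3 (-q2)) as [_ [Q3 Q2]]; auto.
    destruct (row_zero s (-q3) 0 q1) as [_ [_ Q1]]; auto.
    apply Nq. repeat split; lra.
Qed.

Lemma face_of_bound (f g w : form) (B : R) : is_form 4 f -> P34 g ->
  (forall x y z, g x y z <= B * w x y z) -> (forall x y z, 0 <= w x y z <= f x y z) -> face f g.
Proof.
  intros Hf [Hg Hgn] HB Hw. split; [split; auto|].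
  exists (1 / (Rabs B + 1)). assert (0 < Rabs B + 1) by (pose proof (Rabs_pos B); lra).
  split. apply Rdiv_lt_0_compat; lra.
  split.
  - apply (form_ext _ (fun x y z => f x y z + (- (1 / (Rabs B + 1))) * g x y z)).
    apply form_add; auto. apply form_scal; auto. intros; ring.
  - intros x y z. specialize (HB x y z). specialize (Hw x y z).
    assert (g x y z <= Rabs B * w x y z).
    { eapply Rle_trans; [apply HB|]. apply Rmult_le_compat_r. lra. apply Rle_abs. }
    assert (1 / (Rabs B + 1) * g x y z <= w x y z).
    { apply (Rmult_le_reg_l (Rabs B + 1)); auto.
      replace ((Rabs B + 1) * (1 / (Rabs B + 1) * g x y z)) with (g x y z) by (field; lra).
      pose proof (Rabs_pos B). nra. }
    lra.
Qed.

Lemma quad_coeffs (g : form) : is_form 2 g -> exists c00 c01 c02 c10 c11 c20, forall x y z,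
  g x y z = c00*z^2 + c01*y*z + c02*y^2 + c10*x*z + c11*x*y + c20*x^2.
Proof.
  intros [c H]. exists (c 0 0)%nat, (c 0 1)%nat, (c 0 2)%nat, (c 1 0)%nat, (c 1 1)%nat, (c 2 0)%nat.
  intros. rewrite H. simpl. ring.
Qed.

Lemma lin_zero (a b : R) : (forall t, 0 <= a * t + b) -> a = 0.
Proof.
  intros H. destruct (Req_dec a 0); auto. specialize (H (-(b+1)/a)).
  replace (a * (-(b+1)/a) + b) with (-1) in H by (field; auto). lra.
Qed.

Lemma lin2_zero (a b : R) : (forall t, 0 <= a * t + b * t^2) -> a = 0.
Proof.
  intros H. destruct (Req_dec a 0); auto. exfalso.
  set (u := 1 / (2 * (Rabs b + 1))).
  assert (0 < Rabs b + 1) by (pose proof (Rabs_pos b); lra).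
  assert (Hu : 0 < u) by (unfold u; apply Rdiv_lt_0_compat; lra).
  assert (Hbu : b * u <= 1/2).
  { unfold u. apply (Rmult_le_reg_l (2 * (Rabs b + 1))). lra.
    replace (2 * (Rabs b + 1) * (b * (1 / (2 * (Rabs b + 1))))) with b by (field; lra).
    pose proof (Rle_abs b). lra. }
  specialize (H (- a * u)).
  assert (0 < a * a) by (pose proof (Rsqr_pos_lt a H0); unfold Rsqr in *; lra).
  replace (a * (- a * u) + b * (- a * u)^2) with (a * a * u * (b * u - 1)) in H by ring.
  assert (0 < a * a * u) by (apply Rmult_lt_0_compat; auto).
  nra.
Qed.

Lemma nz_sq a b c : nonzero_vec (a,b,c) -> 0 < a^2 + b^2 + c^2.
Proof.
  intros H. pose proof (nz_vec _ _ _ H).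
  destruct (Req_dec a 0); [destruct (Req_dec b 0); [destruct (Req_dec c 0)|]|].
  - exfalso; auto.
  - pose proof (pow2_ge_0 a). pose proof (pow2_ge_0 b). pose proof (Rsqr_pos_lt c H3). unfold Rsqr in *. nra.
  - pose proof (pow2_ge_0 a). pose proof (pow2_ge_0 c). pose proof (Rsqr_pos_lt b H2). unfold Rsqr in *. nra.
  - pose proof (pow2_ge_0 c). pose proof (pow2_ge_0 b). pose proof (Rsqr_pos_lt a H1). unfold Rsqr in *. nra.
Qed.

Lemma P34_pull (s : GL3) h : P34 h -> P34 (pull s h).
Proof. intros [Hf Hn]. split. apply pull_form; auto. intros x y z. apply Hn. Qed.

Lemma lU_P34 (l' : vec) U h : F_lU l' U h -> P34 h.
Proof.
  destruct l' as [[a b] c]. intros [g [Hg [Hn [_ E]]]]. split.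
  - apply (form_ext _ (fun x y z => lin (a,b,c) x y z ^ 2 * g x y z) _ (form_mul 2 2 (fun x y z => (lin (a,b,c) x y z)^2) g (form_pow 2 _ (form_lin a b c)) Hg)).
    intros; apply E.
  - intros x y z. rewrite E. apply Rmult_le_pos; auto. apply pow2_ge_0.
Qed.

Definition MQ := mk3 (1/2) (1/2) 0 (1/2) (-1/2) 0 0 0 1.
Definition MQi := mk3 1 1 0 1 (-1) 0 0 0 1.
Lemma MQ1 : is_id (mmul MQ MQi).
Proof. intros i j Hi Hj. destruct i as [|[|[|i]]]; try lia; destruct j as [|[|[|j]]]; try lia; unfold mmul, MQ, MQi, mk3; simpl; field. Qed.
Lemma MQ2 : is_id (mmul MQi MQ).
Proof. intros i j Hi Hj. destruct i as [|[|[|i]]]; try lia; destruct j as [|[|[|j]]]; try lia; unfold mmul, MQ, MQi, mk3; simpl; field. Qed.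
Definition sQ : GL3 := Build_GL3 MQ MQi MQ1 MQ2.

Lemma Q_in (f : form) : is_form 4 f -> (forall x y z, 0 <= (x*y+z^2)^2 <= f x y z) ->
  subset_up_to_GL F_Q (face f).
Proof.
  intros Hf Hw. apply (sub_intro _ _ sQ). intros h [Hh [eps [He [_ Hn]]]].
  apply (face_of_bound f (pull sQ h) (fun x y z => (x*y+z^2)^2) (1/eps)); auto.
  - apply P34_pull; auto.
  - intros x y z. specialize (Hn (mapp MQ x y z 0) (mapp MQ x y z 1) (mapp MQ x y z 2)).
    unfold pull. simpl gM.
    assert (E : (mapp MQ x y z 0 ^ 2 - mapp MQ x y z 1 ^ 2 + mapp MQ x y z 2 ^ 2) = x*y+z^2)
      by (unfold mapp, MQ, mk3; simpl; field).
    cbv beta in Hn. rewrite E in Hn.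
    apply (Rmult_le_reg_l eps); auto.
    replace (eps * (1 / eps * (x * y + z ^ 2) ^ 2)) with ((x * y + z ^ 2) ^ 2) by (field; lra).
    lra.
Qed.

Lemma base_forms : is_form 4 (fun x y z => (x*y + z^2)^2 + y^2*z^2 + y^4) /\
  is_form 4 (fun x y z => (x*y + z^2)^2 + y^4) /\ is_form 4 (fun x y z => (x*y + z^2)^2 + y^2*z^2).
Proof.
  assert (Fq : is_form 2 (fun x y z => x*y + z^2)).
  { apply (form_ext _ (fun x y z => x^1*y^1*z^(2-1-1) + x^0*y^0*z^(2-0-0))).
    apply form_add; apply form_mono; lia. intros; simpl; ring. }
  assert (Fy2 : is_form 2 (fun x y z => y^2)).
  { apply (form_ext _ (fun x y z => x^0*y^2*z^(2-0-2))). apply form_mono; lia. intros; simpl; ring. }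
  assert (Fz2 : is_form 2 (fun x y z => z^2)).
  { apply (form_ext _ (fun x y z => x^0*y^0*z^(2-0-0))). apply form_mono; lia. intros; simpl; ring. }
  assert (Fq2 := form_mul 2 2 _ _ Fq Fq).
  assert (Fyz := form_mul 2 2 _ _ Fy2 Fz2).
  assert (Fyy := form_mul 2 2 _ _ Fy2 Fy2).
  simpl in Fq2, Fyz, Fyy.
  split; [|split].
  - apply (form_ext _ _ _ (form_add _ _ _ (form_add _ _ _ Fq2 Fyz) Fyy)). intros; ring.
  - apply (form_ext _ _ _ (form_add _ _ _ Fq2 Fyy)). intros; ring.
  - apply (form_ext _ _ _ (form_add _ _ _ Fq2 Fyz)). intros; ring.
Qed.

Lemma part4 : subset_up_to_GL F_Q F_T1s /\ subset_up_to_GL F_Q F_T1ss /\ subset_up_to_GL F_Q F_T2s.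
Proof.
  destruct base_forms as [F1 [F2 F3]].
  split; [|split]; apply Q_in; auto.
  - intros. pose proof (pow2_ge_0 (x*y+z^2)). pose proof (pow2_ge_0 (y*z)). pose proof (pow2_ge_0 (y^2)). nra.
  - intros. pose proof (pow2_ge_0 (x*y+z^2)). pose proof (pow2_ge_0 (y^2)). nra.
  - intros. pose proof (pow2_ge_0 (x*y+z^2)). pose proof (pow2_ge_0 (y*z)). nra.
Qed.

Definition Nlk (a b c d e f : R) : mat := mk3 (b*f - c*e) (c*d - a*f) (a*e - b*d) a b c d e f.

Lemma Nlk_det a b c d e f : nonzero_vec (a,b,c) -> ~ proportional (a,b,c) (d,e,f) -> det3 (Nlk a b c d e f) <> 0.
Proof.
  intros hl hp E. unfold det3, Nlk, mk3 in E. simpl in E.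
  set (w1 := b*f - c*e) in *. set (w2 := c*d - a*f) in *. set (w3 := a*e - b*d) in *.
  assert (E2 : w1^2 + w2^2 + w3^2 = 0) by (rewrite <- E; unfold w1, w2, w3; ring).
  pose proof (pow2_ge_0 w1). pose proof (pow2_ge_0 w2). pose proof (pow2_ge_0 w3).
  assert (W1 : w1 = 0) by (apply (pow0 _ 2); lra). assert (W2 : w2 = 0) by (apply (pow0 _ 2); lra).
  assert (W3 : w3 = 0) by (apply (pow0 _ 2); lra).
  pose proof (nz_sq _ _ _ hl) as L.
  apply hp. exists ((a*d+b*e+c*f) / (a^2+b^2+c^2)).
  assert (H2 : d = (a*d+b*e+c*f) / (a^2+b^2+c^2) * a).
  { apply (Rmult_eq_reg_l (a^2+b^2+c^2)); [|lra].
    replace ((a^2+b^2+c^2) * ((a*d+b*e+c*f) / (a^2+b^2+c^2) * a)) with ((a*d+b*e+c*f) * a) by (field; lra).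
    transitivity ((a^2+b^2+c^2) * d + (b * w3 - c * w2)). rewrite W2, W3; ring. unfold w2, w3; ring. }
  assert (H3 : e = (a*d+b*e+c*f) / (a^2+b^2+c^2) * b).
  { apply (Rmult_eq_reg_l (a^2+b^2+c^2)); [|lra].
    replace ((a^2+b^2+c^2) * ((a*d+b*e+c*f) / (a^2+b^2+c^2) * b)) with ((a*d+b*e+c*f) * b) by (field; lra).
    transitivity ((a^2+b^2+c^2) * e + (c * w1 - a * w3)). rewrite W1, W3; ring. unfold w1, w3; ring. }
  assert (H4 : f = (a*d+b*e+c*f) / (a^2+b^2+c^2) * c).
  { apply (Rmult_eq_reg_l (a^2+b^2+c^2)); [|lra].
    replace ((a^2+b^2+c^2) * ((a*d+b*e+c*f) / (a^2+b^2+c^2) * c)) with ((a*d+b*e+c*f) * c) by (field; lra).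
    transitivity ((a^2+b^2+c^2) * f + (a * w2 - b * w1)). rewrite W1, W2; ring. unfold w1, w2; ring. }
  set (t := (a*d+b*e+c*f)/(a^2+b^2+c^2)) in *. rewrite H2, H3, H4 at 1. reflexivity.
Qed.

Lemma lk_GL a b c d e f : nonzero_vec (a,b,c) -> ~ proportional (a,b,c) (d,e,f) ->
  exists s : GL3, (forall x y z, lin (a,b,c) (mapp (gM s) x y z 0) (mapp (gM s) x y z 1) (mapp (gM s) x y z 2) = y) /\
                  (forall x y z, lin (d,e,f) (mapp (gM s) x y z 0) (mapp (gM s) x y z 1) (mapp (gM s) x y z 2) = z).
Proof.
  intros hl hp. pose proof (inv3_ok _ (Nlk_det a b c d e f hl hp)) as [H1 H2].
  exists (Build_GL3 _ _ H2 H1).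
  split; intros; rewrite pull_lin.
  - assert (E : forall j, rowM (Build_GL3 _ _ H2 H1) a b c j = mmul (Nlk a b c d e f) (inv3 (Nlk a b c d e f)) 1%nat j)
      by (intros; unfold rowM, mmul, Nlk, mk3; simpl; ring).
    rewrite !E, !H1 by lia. simpl. ring.
  - assert (E : forall j, rowM (Build_GL3 _ _ H2 H1) d e f j = mmul (Nlk a b c d e f) (inv3 (Nlk a b c d e f)) 2%nat j)
      by (intros; unfold rowM, mmul, Nlk, mk3; simpl; ring).
    rewrite !E, !H1 by lia. simpl. ring.
Qed.

Lemma part3a (l k : vec) : nonzero_vec l -> ~ proportional l k -> subset_up_to_GL (F_L3 l k) F_T2s.
Proof.
  destruct l as [[a b] c]. destruct k as [[d e] f]. intros hl hp.
  destruct (lk_GL a b c d e f hl hp) as [s [Ll Lk]].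
  apply (sub_intro _ _ s). intros h Hh.
  pose proof (lU_P34 _ _ _ Hh) as HP.
  destruct Hh as [g [Hg [Hgn [Hv E]]]].
  destruct (quad_coeffs _ (pull_form s 2 g Hg)) as [c00 [c01 [c02 [c10 [c11 [c20 C]]]]]].
  assert (V : forall x y, pull s g x y 0 = 0).
  { intros. unfold pull. apply Hv. rewrite Lk. auto. }
  assert (N : forall x y z, 0 <= pull s g x y z) by (intros; apply Hgn).
  assert (Z20 : c20 = 0) by (pose proof (V 1 0); rewrite C in H; lra).
  assert (Z02 : c02 = 0) by (pose proof (V 0 1); rewrite C in H; lra).
  assert (Z11 : c11 = 0) by (pose proof (V 1 1); rewrite C in H; lra).
  assert (Z01 : c01 = 0).
  { apply (lin2_zero _ c00). intros t. specialize (N 0 1 t). rewrite C in N. lra. }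
  assert (Z10 : c10 = 0).
  { apply (lin2_zero _ c00). intros t. specialize (N 1 0 t). rewrite C in N. lra. }
  apply (face_of_bound _ _ (fun x y z => y^2 * z^2) c00).
  - apply base_forms.
  - apply P34_pull; auto.
  - intros x y z. unfold pull at 1. rewrite E, Ll. fold (pull s g x y z). rewrite C. rewrite Z20, Z02, Z11, Z01, Z10. right; ring.
  - intros. pose proof (pow2_ge_0 (x*y+z^2)). pose proof (pow2_ge_0 (y*z)). nra.
Qed.

Lemma part2a (l k : vec) : nonzero_vec l -> ~ proportional l k -> subset_up_to_GL (F_L4 l) F_T1ss.
Proof.
  destruct l as [[a b] c]. destruct k as [[d e] f]. intros hl hp.
  destruct (lk_GL a b c d e f hl hp) as [s [Ll Lk]].
  apply (sub_intro _ _ s). intros h Hh.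
  pose proof (lU_P34 _ _ _ Hh) as HP.
  destruct Hh as [g [Hg [Hgn [Hv E]]]].
  destruct (quad_coeffs _ (pull_form s 2 g Hg)) as [c00 [c01 [c02 [c10 [c11 [c20 C]]]]]].
  assert (V : forall x z, pull s g x 0 z = 0).
  { intros. unfold pull. apply Hv. rewrite Ll. auto. }
  assert (N : forall x y z, 0 <= pull s g x y z) by (intros; apply Hgn).
  assert (Z20 : c20 = 0) by (pose proof (V 1 0); rewrite C in H; lra).
  assert (Z00 : c00 = 0) by (pose proof (V 0 1); rewrite C in H; lra).
  assert (Z10 : c10 = 0) by (pose proof (V 1 1); rewrite C in H; lra).
  assert (Z01 : c01 = 0).
  { apply (lin2_zero _ c02). intros t. specialize (N 0 t 1). rewrite C in N. lra. }
  assert (Z11 : c11 = 0).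
  { apply (lin2_zero _ c02). intros t. specialize (N 1 t 0). rewrite C in N. lra. }
  apply (face_of_bound _ _ (fun x y z => y^4) c02).
  - apply base_forms.
  - apply P34_pull; auto.
  - intros x y z. unfold pull at 1. rewrite E, Ll. fold (pull s g x y z). rewrite C. rewrite Z20, Z00, Z11, Z01, Z10. right; ring.
  - intros. pose proof (pow2_ge_0 (x*y+z^2)). pose proof (pow2_ge_0 (y^2)). nra.
Qed.

Lemma quad_bound (c00 c01 c02 y z : R) :
  y^2 * (c00 * z^2 + c01 * y * z + c02 * y^2) <= (Rabs c00 + Rabs c01 + Rabs c02) * (y^4 + y^2 * z^2).
Proof.
  assert (T0 : c00 * (y^2*z^2) <= Rabs c00 * (y^4 + y^2*z^2)).
  { eapply Rle_trans. apply Rmult_le_compat_r. pose proof (pow2_ge_0 (y*z)); nra. apply Rle_abs.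
    apply Rmult_le_compat_l. apply Rabs_pos. pose proof (pow2_ge_0 (y^2)); nra. }
  assert (T2 : c02 * (y^4) <= Rabs c02 * (y^4 + y^2*z^2)).
  { eapply Rle_trans. apply Rmult_le_compat_r. pose proof (pow2_ge_0 (y^2)); nra. apply Rle_abs.
    apply Rmult_le_compat_l. apply Rabs_pos. pose proof (pow2_ge_0 (y*z)); nra. }
  assert (T1 : c01 * (y^2 * (y*z)) <= Rabs c01 * (y^4 + y^2*z^2)).
  { eapply Rle_trans. apply Rle_abs. rewrite Rabs_mult. apply Rmult_le_compat_l. apply Rabs_pos.
    rewrite Rabs_mult. rewrite (Rabs_right (y^2)) by (apply Rle_ge, pow2_ge_0).
    assert (Rabs (y*z) <= y^2 + z^2).
    { apply Rabs_le. split; nra. }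
    pose proof (pow2_ge_0 y). nra. }
  nra.
Qed.

Lemma part1a (l p : vec) : nonzero_vec l -> nonzero_vec p -> on_line p l -> subset_up_to_GL (F_L2 l p) F_T1s.
Proof.
  destruct l as [[a b] c]. destruct p as [[p1 p2] p3]. intros hl hp hpl. simpl in hpl.
  set (M := mk3 p1 a (b*p3 - c*p2) p2 b (c*p1 - a*p3) p3 c (a*p2 - b*p1)).
  assert (D : det3 M <> 0).
  { assert (det3 M = -((a^2+b^2+c^2)*(p1^2+p2^2+p3^2) - (a*p1+b*p2+c*p3)^2)) by (unfold det3, M, mk3; simpl; ring).
    rewrite H. pose proof (nz_sq _ _ _ hl). pose proof (nz_sq _ _ _ hp).
    replace (a * p1 + b * p2 + c * p3) with 0 by lra.
    assert (0 < (a^2+b^2+c^2)*(p1^2+p2^2+p3^2)) by (apply Rmult_lt_0_compat; auto). nra. }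
  pose proof (inv3_ok _ D) as [H1 H2].
  set (s := Build_GL3 _ _ H1 H2).
  set (L := a^2+b^2+c^2).
  assert (Ll : forall x y z, lin (a,b,c) (mapp (gM s) x y z 0) (mapp (gM s) x y z 1) (mapp (gM s) x y z 2) = L * y).
  { intros. unfold lin, mapp, s, M, mk3. simpl.
    transitivity ((a*p1+b*p2+c*p3)*x + (a^2+b^2+c^2)*y). ring. rewrite hpl. unfold L. ring. }
  apply (sub_intro _ _ s). intros h Hh.
  pose proof (lU_P34 _ _ _ Hh) as HP.
  destruct Hh as [g [Hg [Hgn [Hv E]]]].
  destruct (quad_coeffs _ (pull_form s 2 g Hg)) as [c00 [c01 [c02 [c10 [c11 [c20 C]]]]]].
  assert (V : pull s g 1 0 0 = 0).
  { unfold pull. unfold vanish_at, eval in Hv. transitivity (g p1 p2 p3); [|exact Hv]. unfold mapp, s, M, mk3. simpl. f_equal; ring. }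
  assert (N : forall x y z, 0 <= pull s g x y z) by (intros; apply Hgn).
  assert (Z20 : c20 = 0) by (rewrite C in V; lra).
  assert (Z10 : c10 = 0).
  { apply (lin_zero _ c00). intros t. specialize (N t 0 1). rewrite C, Z20 in N. lra. }
  assert (Z11 : c11 = 0).
  { apply (lin_zero _ c02). intros t. specialize (N t 1 0). rewrite C, Z20 in N. lra. }
  apply (face_of_bound _ _ (fun x y z => y^4 + y^2*z^2) (L^2 * (Rabs c00 + Rabs c01 + Rabs c02))).
  - apply base_forms.
  - apply P34_pull; auto.
  - intros x y z. unfold pull at 1. rewrite E, Ll. fold (pull s g x y z). rewrite C. rewrite Z20, Z11, Z10.
    pose proof (quad_bound c00 c01 c02 y z). pose proof (pow2_ge_0 L).
    replace ((L * y) ^ 2 * (c00 * z ^ 2 + c01 * y * z + c02 * y ^ 2 + 0 * x * z + 0 * x * y + 0 * x ^ 2))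
      with (L^2 * (y^2 * (c00 * z ^ 2 + c01 * y * z + c02 * y ^ 2))) by ring.
    eapply Rle_trans; [apply Rmult_le_compat_l; [exact H0| exact H] | right; ring].
  - intros. pose proof (pow2_ge_0 (x*y+z^2)). pose proof (pow2_ge_0 (y*z)). pose proof (pow2_ge_0 (y^2)). nra.
Qed.


Theorem mainTheorem20 (l k p q : vec)
  (hl : nonzero_vec l) (hk : nonzero_vec k) (hlk : ~ proportional l k)
  (hp : nonzero_vec p) (hpl : on_line p l)
  (hq : nonzero_vec q) (hql : ~ on_line q l) :
  (subset_up_to_GL (F_L2 l p) F_T1s /\ ~ subset_up_to_GL (F_L1 l q) F_T1s) /\
  (subset_up_to_GL (F_L4 l) F_T1ss /\ ~ subset_up_to_GL (F_L3 l k) F_T1ss) /\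
  (subset_up_to_GL (F_L3 l k) F_T2s /\ ~ subset_up_to_GL (F_L4 l) F_T2s) /\
  (subset_up_to_GL F_Q F_T1s /\ subset_up_to_GL F_Q F_T1ss /\ subset_up_to_GL F_Q F_T2s).
Proof.
  split; [split|split; [split|split; [split|]]].
  - apply part1a; auto.
  - apply part1b; auto.
  - apply (part2a l k); auto.
  - apply part2b; auto.
  - apply part3a; auto.
  - apply part3b; auto.
  - apply part4.
Qed.
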